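(* Let $(\mathfrak{h},[\,,\,],* )$ be a right Post-Lie algebra, let $(A_+,\cdot)$ be a non-unital associative algebra with a linear map $\rhd:A_+\otimes A_+\to A_+$, and let $\phi:\mathfrak{h}\to A_+$ be linear with $\phi([x,y])=\phi(x)\phi(y)-\phi(y)\phi(x)$ and $\phi(x*y)=\phi(x)\rhd\phi(y)$ for all $x,y\in\mathfrak{h}$. Let $A=\mathbb{K}1\oplus A_+$ be the unitization and extend $\rhd$ bilinearly to $A$ by $1\rhd x=0$, $x\rhd 1=x$ for $x\in A_+$, and $1\rhd 1=1$. Assume that for all $x,y$ in the subalgebra $\langle\mathrm{im}(\phi)\rangle$ of $A$ generated by $\mathrm{im}(\phi)$ and all $z\in\mathrm{im}(\phi)$: $(x\cdot y)\rhd z=(x\rhd z)\cdot y+x\cdot(y\rhd z)$ and $x\rhd(y\cdot z)=(x\rhd y)\rhd z-x\rhd(y\rhd z)$. Then there exists a unique algebra morphism $\Phi:\mathcal{U}(\mathfrak{h})\to A$ with $\Phi|_{\mathfrak{h}}=\phi$, and it satisfies for all $f,g,h\in\mathcal{U}(\mathfrak{h})$: $\Phi(f*g)=\Phi(f)\rhd\Phi(g)$; $(\Phi(f)\cdot\Phi(g))\rhd\Phi(h)=(\Phi(f)\rhd\Phi(h^{(1)}))\cdot(\Phi(g)\rhd\Phi(h^{(2)}))$; $(\Phi(f)\rhd\Phi(g))\rhd\Phi(h)=\Phi(f)\rhd\big((\Phi(g)\rhd\Phi(h^{(1)}))\cdot\Phi(h^{(2)})\big)$, where $*$ on $\mathcal{U}(\mathfrak{h})$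 is the extension described below.
   Context: A right Post-Lie algebra is a Lie algebra $(\mathfrak{h},[\,,\,])$ with bilinear $*$ such that $x*[y,z]=a_*(x,y,z)-a_*(x,z,y)$ and $[x,y]*z=[x*z,y]+[x,y*z]$, where $a_*(x,y,z)=(x*y)*z-x*(y*z)$. $\mathcal{U}(\mathfrak{h})$ is the enveloping algebra with coproduct $\Delta$ (elements of $\mathfrak{h}$ primitive), Sweedler notation $\Delta(h)=h^{(1)}\otimes h^{(2)}$. Extension (known fact): $*$ extends uniquely to $\mathcal{U}(\mathfrak{h})\otimes\mathcal{U}(\mathfrak{h})\to\mathcal{U}(\mathfrak{h})$ such that for all $f,g,h\in\mathcal{U}(\mathfrak{h})$, $y\in\mathfrak{h}$: $\varepsilon(f*g)=\varepsilon(f)\varepsilon(g)$; $\Delta(f*g)=\Delta(f)*\Delta(g)$; $f*1=f$; $1*f=\varepsilon(f)1$; $f*(gy)=(f*g)*y-f*(g*y)$; $(fg)*h=(f*h^{(1)})(g*h^{(2)})$; $(f*g)*h=f*\big((g*h^{(1)})h^{(2)}\big)$. *)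

(* Defs.v *)
From HB Require Import structures.
From mathcomp Require Import all_boot all_algebra.

Set Implicit Arguments.
Unset Strict Implicit.
Unset Printing Implicit Defensive.

Import GRing.Theory.
Local Open Scope ring_scope.

Section Unitization.
Variable K : fieldType.
Variable V : lmodType K.

Definition bilinear_op (U W : lmodType K) (b : U -> U -> W) : Prop :=
  (forall (a : K) x y z, b (a *: x + y) z = a *: b x z + b y z) /\
  (forall (a : K) x y z, b z (a *: x + y) = a *: b z x + b z y).

Definition nonunital_assoc (m : V -> V -> V) : Prop :=
  bilinear_op m /\ (forall x y z, m (m x y) z = m x (m y z)).

Variable m : V -> V -> V.
Hypothesis Hm : nonunital_assoc m.

Lemma mDl x y z : m (x + y) z = m x z + m y z.
Proof. by move: Hm; rewrite /nonunital_assoc /bilinear_op => -[[H _] _]; rewrite -[x]scale1r H !scale1r. Qed.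
Lemma mDr x y z : m z (x + y) = m z x + m z y.
Proof. by move: Hm; rewrite /nonunital_assoc /bilinear_op => -[[_ H] _]; rewrite -[x]scale1r H !scale1r. Qed.
Lemma m0l z : m 0 z = 0.
Proof. have H := @mDl 0 0 z; rewrite addr0 in H. by apply: (addrI (m 0 z)); rewrite -H addr0. Qed.
Lemma m0r z : m z 0 = 0.
Proof. have H := @mDr 0 0 z; rewrite addr0 in H. by apply: (addrI (m z 0)); rewrite -H addr0. Qed.
Lemma mZl (a : K) x z : m (a *: x) z = a *: m x z.
Proof. by move: Hm; rewrite /nonunital_assoc /bilinear_op => -[[H _] _]; rewrite -[a *: x]addr0 H m0l addr0. Qed.
Lemma mZr (a : K) x z : m z (a *: x) = a *: m z x.
Proof. by move: Hm; rewrite /nonunital_assoc /bilinear_op => -[[_ H] _]; rewrite -[a *: x]addr0 H m0r addr0. Qed.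
Lemma mA x y z : m (m x y) z = m x (m y z).
Proof. by move: Hm; rewrite /nonunital_assoc => -[]. Qed.

Definition unitization of nonunital_assoc m : Type := (K^o * V)%type.

HB.instance Definition _ := GRing.Lmodule.on (unitization Hm).

Definition unit_one : unitization Hm := (1 : K^o, 0).
Definition unit_mul (u v : unitization Hm) : unitization Hm :=
  ((u.1 * v.1 : K^o), u.1 *: v.2 + v.1 *: u.2 + m u.2 v.2).

Lemma unit_mulA : associative unit_mul.
Proof.
move=> [a x] [b y] [c z]; rewrite /unit_mul /=; congr pair; first by rewrite mulrA.
rewrite !mDl !mDr !mZl !mZr mA !scalerDr !scalerA -!addrA [c * a]mulrC [c * b]mulrC.
congr (_ + _); congr (_ + _).
rewrite (addrCA (a *: m y z)); congr (_ + _).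
rewrite [RHS](addrCA (c *: m x y)); congr (_ + _).
by rewrite (addrCA (b *: m x z)).
Qed.

Lemma unit_mul1r : left_id unit_one unit_mul.
Proof.
move=> [b y]; rewrite /unit_mul /unit_one /=.
by rewrite mul1r scale1r scaler0 m0l !addr0.
Qed.

Lemma unit_mulr1 : right_id unit_one unit_mul.
Proof.
move=> [a x]; rewrite /unit_mul /unit_one /=.
by rewrite mulr1 scale1r scaler0 m0r add0r addr0.
Qed.

Lemma unit_mulrDl : left_distributive unit_mul +%R.
Proof.
move=> [a x] [b y] [c z]; rewrite /unit_mul /=; congr pair; first by rewrite mulrDl.
rewrite scalerDl scalerDr mDl.
by rewrite [RHS]addrACA [X in X + _ = _]addrACA.
Qed.

Lemma unit_mulrDr : right_distributive unit_mul +%R.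
Proof.
move=> [a x] [b y] [c z]; rewrite /unit_mul /=; congr pair; first by rewrite mulrDr.
rewrite scalerDl scalerDr mDr.
by rewrite [RHS]addrACA [X in X + _ = _]addrACA.
Qed.

Lemma unit_oner_neq0 : unit_one != 0.
Proof. by apply/eqP; case=> /eqP; rewrite oner_eq0. Qed.

HB.instance Definition _ := GRing.Zmodule_isNzRing.Build (unitization Hm)
  unit_mulA unit_mul1r unit_mulr1 unit_mulrDl unit_mulrDr unit_oner_neq0.

Lemma unit_scalerAl (k : K) (u v : unitization Hm) : k *: (u * v) = (k *: u) * v.
Proof.
case: u v => [a x] [b y]; rewrite /GRing.mul /= /unit_mul /=; congr pair; first exact: scalerAl.
by rewrite !scalerDr !scalerA mZl [k * b]mulrC.
Qed.

HB.instance Definition _ := GRing.Lmodule_isLalgebra.Build K (unitization Hm) unit_scalerAl.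

Lemma unit_scalerAr (k : K) (u v : unitization Hm) : k *: (u * v) = u * (k *: v).
Proof.
case: u v => [a x] [b y]; rewrite /GRing.mul /= /unit_mul /=; congr pair; first exact: scalerAr.
rewrite /= -[k *: b]/(k * b).
by rewrite !scalerDr !scalerA mZr [k * b]mulrC [a * k]mulrC.
Qed.

HB.instance Definition _ := GRing.Lalgebra_isAlgebra.Build K (unitization Hm) unit_scalerAr.

End Unitization.




Section PostLie.
Variable K : fieldType.

Definition linear_map (U W : lmodType K) (f : U -> W) : Prop :=
  forall (a : K) u v, f (a *: u + v) = a *: f u + f v.

Definition lie_bracket (L : lmodType K) (br : L -> L -> L) : Prop :=
  [/\ bilinear_op br, (forall x, br x x = 0) &
      (forall x y z, br x (br y z) + br y (br z x) + br z (br x y) = 0)].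

Definition assoc_st (L : lmodType K) (st : L -> L -> L) (x y z : L) : L :=
  st (st x y) z - st x (st y z).

Definition right_postLie (L : lmodType K) (br st : L -> L -> L) : Prop :=
  [/\ lie_bracket br, bilinear_op st,
      (forall x y z, st x (br y z) = assoc_st st x y z - assoc_st st x z y) &
      (forall x y z, st (br x y) z = br (st x z) y + br x (st y z))].

Definition alg_morph (U B : algType K) (F : U -> B) : Prop :=
  [/\ linear_map F, F 1 = 1 & forall u v, F (u * v) = F u * F v].

Definition lie_morph (L : lmodType K) (br : L -> L -> L) (B : algType K)
  (f : L -> B) : Prop :=
  linear_map f /\ (forall x y, f (br x y) = f x * f y - f y * f x).

(* Sweedler sums: an element of U (x) U is represented by a finite list of
   pairs [p_i] standing for sum_i p_i.1 (x) p_i.2; a bilinear map b is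
   applied to it via its linearization. *)
Definition sweedler (U : Type) (W : nmodType) (D : U -> seq (U * U))
  (b : U -> U -> W) (u : U) : W :=
  \sum_(p <- D u) b p.1 p.2.

(* The universal enveloping algebra U(L) of the Lie algebra (L, [,]),
   characterized by its universal property, together with its counit,
   its coproduct (the tensor-level identities being stated through the
   universal property of the tensor product, i.e. tested against all
   bilinear maps), and the extension of the post-Lie product * to U(L)
   as in the "known fact" of the paper. *)
Record enveloping (L : lmodType K) (br st : L -> L -> L) := Enveloping {
  env_U : algType K;
  env_i : L -> env_U;
  env_i_lie : lie_morph br env_i;
  env_univ : forall (B : algType K) (f : L -> B), lie_morph br f ->
    exists F : env_U -> B,
      [/\ alg_morph F, (forall x, F (env_i x) = f x) &
          forall G : env_U -> B, alg_morph G -> (forall x, G (env_i x) = f x) ->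
            forall u, G u = F u];
  env_eps : env_U -> K^o;
  env_eps_morph : alg_morph env_eps;
  env_eps_i : forall x, env_eps (env_i x) = 0;
  env_D : env_U -> seq (env_U * env_U);
  env_D_lin : forall (W : lmodType K) (b : env_U -> env_U -> W), bilinear_op b ->
    linear_map (sweedler env_D b);
  env_D_one : forall (W : lmodType K) (b : env_U -> env_U -> W), bilinear_op b ->
    sweedler env_D b 1 = b 1 1;
  env_D_i : forall (W : lmodType K) (b : env_U -> env_U -> W) x, bilinear_op b ->
    sweedler env_D b (env_i x) = b (env_i x) 1 + b 1 (env_i x);
  env_D_mul : forall (W : lmodType K) (b : env_U -> env_U -> W) u v, bilinear_op b ->
    sweedler env_D b (u * v) =
      \sum_(p <- env_D u) \sum_(q <- env_D v) b (p.1 * q.1) (p.2 * q.2);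
  env_star : env_U -> env_U -> env_U;
  env_star_bilin : bilinear_op env_star;
  env_star_ext : forall x y, env_star (env_i x) (env_i y) = env_i (st x y);
  env_star_eps : forall f g, env_eps (env_star f g) = env_eps f * env_eps g;
  env_star_D : forall (W : lmodType K) (b : env_U -> env_U -> W) f g, bilinear_op b ->
    sweedler env_D b (env_star f g) =
      \sum_(p <- env_D f) \sum_(q <- env_D g) b (env_star p.1 q.1) (env_star p.2 q.2);
  env_star_1r : forall f, env_star f 1 = f;
  env_star_1l : forall f, env_star 1 f = env_eps f *: 1;
  env_star_mulr : forall f g y,
    env_star f (g * env_i y) = env_star (env_star f g) (env_i y) - env_star f (env_star g (env_i y));
  env_star_mull : forall f g h,
    env_star (f * g) h = sweedler env_D (fun a b => env_star f a * env_star g b) h;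
  env_star_assoc : forall f g h,
    env_star (env_star f g) h = env_star f (sweedler env_D (fun a b => env_star g a * b) h)
}.

Inductive gen_subalg (B : algType K) (S : B -> Prop) : B -> Prop :=
  | gen_in x : S x -> gen_subalg S x
  | gen_one : gen_subalg S 1
  | gen_add x y : gen_subalg S x -> gen_subalg S y -> gen_subalg S (x + y)
  | gen_scale (a : K) x : gen_subalg S x -> gen_subalg S (a *: x)
  | gen_mul x y : gen_subalg S x -> gen_subalg S y -> gen_subalg S (x * y).

End PostLie.

Section UnitTri.
Variables (K : fieldType) (V : lmodType K) (m : V -> V -> V) (Hm : nonunital_assoc m).

Definition unit_incl (v : V) : unitization Hm := (0 : K^o, v).

(* bilinear extension of |> to A:  1|>1 = 1, 1|>x = 0, x|>1 = x, i.e.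
   (a1 + x) |> (b1 + y) = ab 1 + (b x + x |> y) *)
Definition unit_tri (tr : V -> V -> V) (u v : unitization Hm) : unitization Hm :=
  ((u.1 * v.1 : K^o), v.1 *: u.2 + tr u.2 v.2).
End UnitTri.

Arguments unit_tri {K V m} Hm tr u v.
Arguments env_U {K L br st} e.
Arguments env_i {K L br st} e _.
Arguments env_eps {K L br st} e _.
Arguments env_D {K L br st} e _.
Arguments env_star {K L br st} e _ _.

(* Main.v *)
Require Import Defs.
From HB Require Import structures.
From mathcomp Require Import all_boot all_algebra.
From mathcomp Require Import boolp.
Import GRing.Theory.
Local Open Scope ring_scope.
Set Implicit Arguments.
Unset Strict Implicit.

Section Generic.
Variable K : fieldType.

Lemma bDl (U W : lmodType K) (b : U -> U -> W) (Hb : bilinear_op b) x y z :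
  b (x + y) z = b x z + b y z.
Proof. by case: (Hb) => H _; rewrite -[x]scale1r H !scale1r. Qed.
Lemma bDr (U W : lmodType K) (b : U -> U -> W) (Hb : bilinear_op b) x y z :
  b z (x + y) = b z x + b z y.
Proof. by case: (Hb) => _ H; rewrite -[x]scale1r H !scale1r. Qed.
Lemma b0l (U W : lmodType K) (b : U -> U -> W) (Hb : bilinear_op b) z : b 0 z = 0.
Proof. have H := bDl Hb 0 0 z; rewrite addr0 in H; by apply: (addrI (b 0 z)); rewrite -H addr0. Qed.
Lemma b0r (U W : lmodType K) (b : U -> U -> W) (Hb : bilinear_op b) z : b z 0 = 0.
Proof. have H := bDr Hb 0 0 z; rewrite addr0 in H; by apply: (addrI (b z 0)); rewrite -H addr0. Qed.
Lemma bZl (U W : lmodType K) (b : U -> U -> W) (Hb : bilinear_op b) a x z :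
  b (a *: x) z = a *: b x z.
Proof. by case: (Hb) => H _; rewrite -[a *: x]addr0 H (b0l Hb) addr0. Qed.
Lemma bZr (U W : lmodType K) (b : U -> U -> W) (Hb : bilinear_op b) a x z :
  b z (a *: x) = a *: b z x.
Proof. by case: (Hb) => _ H; rewrite -[a *: x]addr0 H (b0r Hb) addr0. Qed.
Lemma bNl (U W : lmodType K) (b : U -> U -> W) (Hb : bilinear_op b) x z :
  b (- x) z = - b x z.
Proof. by rewrite -scaleN1r (bZl Hb) scaleN1r. Qed.
Lemma bNr (U W : lmodType K) (b : U -> U -> W) (Hb : bilinear_op b) x z :
  b z (- x) = - b z x.
Proof. by rewrite -scaleN1r (bZr Hb) scaleN1r. Qed.
Lemma bBl (U W : lmodType K) (b : U -> U -> W) (Hb : bilinear_op b) x y z :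
  b (x - y) z = b x z - b y z.
Proof. by rewrite (bDl Hb) (bNl Hb). Qed.
Lemma bBr (U W : lmodType K) (b : U -> U -> W) (Hb : bilinear_op b) x y z :
  b z (x - y) = b z x - b z y.
Proof. by rewrite (bDr Hb) (bNr Hb). Qed.

Lemma lD (U W : lmodType K) (F : U -> W) (HF : linear_map F) x y : F (x + y) = F x + F y.
Proof. by rewrite -[x]scale1r HF !scale1r. Qed.
Lemma l0 (U W : lmodType K) (F : U -> W) (HF : linear_map F) : F 0 = 0.
Proof. have H := lD HF 0 0; rewrite addr0 in H; by apply: (addrI (F 0)); rewrite -H addr0. Qed.
Lemma lZ (U W : lmodType K) (F : U -> W) (HF : linear_map F) a x : F (a *: x) = a *: F x.
Proof. by rewrite -[a *: x]addr0 HF (l0 HF) addr0. Qed.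
Lemma lN (U W : lmodType K) (F : U -> W) (HF : linear_map F) x : F (- x) = - F x.
Proof. by rewrite -scaleN1r (lZ HF) scaleN1r. Qed.
Lemma lB (U W : lmodType K) (F : U -> W) (HF : linear_map F) x y : F (x - y) = F x - F y.
Proof. by rewrite (lD HF) (lN HF). Qed.
Lemma lsum (U W : lmodType K) (F : U -> W) (HF : linear_map F) (I : Type) (s : seq I) (G : I -> U) :
  F (\sum_(p <- s) G p) = \sum_(p <- s) F (G p).
Proof. elim: s => [|a s IH]; first by rewrite !big_nil (l0 HF). by rewrite !big_cons (lD HF) IH. Qed.

Lemma bil_l (U W : lmodType K) (b : U -> U -> W) (Hb : bilinear_op b) z : linear_map (b z).
Proof. by case: (Hb) => _ H a x y; rewrite H. Qed.
Lemma bil_r (U W : lmodType K) (b : U -> U -> W) (Hb : bilinear_op b) z : linear_map (b^~ z).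
Proof. by case: (Hb) => H _ a x y; rewrite H. Qed.

Lemma bil_mul (U : lmodType K) (B : algType K) (F G : U -> B) :
  linear_map F -> linear_map G -> bilinear_op (fun a c => F a * G c).
Proof.
move=> HF HG; split=> a x y z.
- by rewrite HF mulrDl -scalerAl.
- by rewrite HG mulrDr -scalerAr.
Qed.

Lemma lcomp (U W X : lmodType K) (F : U -> W) (G : W -> X) :
  linear_map F -> linear_map G -> linear_map (G \o F).
Proof. by move=> HF HG a x y /=; rewrite HF HG. Qed.
End Generic.
Section Gen.
Variables (K : fieldType) (L : lmodType K) (br st : L -> L -> L) (E : enveloping br st).

Definition Sgen : env_U E -> Prop := fun w => exists x, w = env_i E x.
Definition Pgen : pred (env_U E) := fun u => `[< gen_subalg Sgen u >].

Lemma Pgen_closed : GRing.subsemialg_closed Pgen.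
Proof.
split.
- by apply/asboolP; apply: gen_one.
- split; first by apply/asboolP; rewrite -(scale0r 1); apply: gen_scale; apply: gen_one.
  by move=> u v /asboolP Hu /asboolP Hv; apply/asboolP; apply: gen_add.
- by move=> a u /asboolP Hu; apply/asboolP; apply: gen_scale.
- by move=> u v /asboolP Hu /asboolP Hv; apply/asboolP; apply: gen_mul.
Qed.

Record subU := SubU {subv : env_U E; subP : Pgen subv}.
HB.instance Definition _ := [isSub for subv].
HB.instance Definition _ := [Equality of subU by <:].
HB.instance Definition _ := [Choice of subU by <:].
HB.instance Definition _ := GRing.SubChoice_isSubAlgebra.Build K (env_U E) Pgen subU Pgen_closed.

Lemma all_gen u : gen_subalg Sgen u.
Proof.
have Hf : lie_morph br (fun x => (@SubU (env_i E x) (introT (asboolP _) (gen_in (ex_intro _ x erefl)))) : subU).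
  split.
  - by move=> a u' v; apply: val_inj => /=; case: (env_i_lie E) => H _; rewrite H.
  - by move=> x y; apply: val_inj => /=; case: (env_i_lie E) => _ H; rewrite H.
have [F [HF HFi _]] := env_univ E Hf.
have [Id [_ _ Huniq]] := env_univ E (env_i_lie E).
have Hval : alg_morph (fun u => val (F u)).
  case: HF => Hl H1 HM; split.
  - by move=> a x y; rewrite Hl.
  - by rewrite H1.
  - by move=> x y; rewrite HM.
have e1 := Huniq _ Hval (fun x => congr1 val (HFi x)).
have e2 := Huniq id (And3 (fun a x y => erefl) erefl (fun x y => erefl)) (fun x => erefl).
have := e2 u; rewrite -e1 => ->. by apply/asboolP; apply: subP.
Qed.
End Gen.
Section Main.
Variables (K : fieldType) (L : lmodType K) (br st : L -> L -> L) (E : enveloping br st)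
  (V : lmodType K) (m : V -> V -> V) (Hm : nonunital_assoc m)
  (tr : V -> V -> V) (Htr : bilinear_op tr)
  (phi : L -> V) (Hphi : linear_map phi).
Hypothesis Hphi_br : forall x y, phi (br x y) = m (phi x) (phi y) - m (phi y) (phi x).

Local Notation A := (unitization Hm).
Local Notation tri := (unit_tri Hm tr).
Local Notation U := (env_U E).
Local Notation i := (env_i E).
Local Notation star := (env_star E).

Lemma A_mulE (u v : A) : u * v = ((u.1 * v.1 : K^o), u.1 *: v.2 + v.1 *: u.2 + m u.2 v.2).
Proof. by []. Qed.
Lemma A_addE (u v : A) : u + v = ((u.1 + v.1 : K^o), u.2 + v.2).
Proof. by []. Qed.
Lemma A_scaleE (a : K) (u : A) : a *: u = ((a * u.1 : K^o), a *: u.2).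
Proof. by []. Qed.
Lemma A_oneE : (1 : A) = ((1 : K^o), 0).
Proof. by []. Qed.
Lemma A_zeroE : (0 : A) = ((0 : K^o), 0).
Proof. by []. Qed.

Lemma incl_lie : lie_morph br (fun x => unit_incl Hm (phi x)).
Proof.
split.
- move=> a x y; rewrite /unit_incl Hphi A_addE A_scaleE /=.
  by congr pair; rewrite mulr0 addr0.
- move=> x y; rewrite /unit_incl A_mulE A_mulE /= Hphi_br.
  have -> : forall (u v : A), u - v = ((u.1 - v.1 : K^o), u.2 - v.2) by [].
  rewrite /=; congr pair; first by rewrite mulr0 subrr.
  by rewrite !scale0r !add0r.
Qed.

Lemma tri_bil : bilinear_op tri.
Proof.
split=> a [x1 x2] [y1 y2] [z1 z2]; rewrite /unit_tri !A_addE !A_scaleE /=; congr pair.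
- by rewrite mulrDl mulrA.
- rewrite (bDl Htr) (bZl Htr) !scalerDr !scalerA mulrC.
  by rewrite addrACA.
- by rewrite mulrDr mulrCA.
- rewrite (bDr Htr) (bZr Htr) !scalerDl !scalerDr -scalerA.
  by rewrite addrACA.
Qed.

Hypothesis Hphi_st : forall x y, phi (st x y) = tr (phi x) (phi y).
Hypothesis Hcond : forall x y z : unitization Hm,
     gen_subalg (fun w : unitization Hm => exists v, w = unit_incl Hm (phi v)) x ->
     gen_subalg (fun w : unitization Hm => exists v, w = unit_incl Hm (phi v)) y ->
     (exists v, z = unit_incl Hm (phi v)) ->
     unit_tri Hm tr (x * y) z = unit_tri Hm tr x z * y + x * unit_tri Hm tr y z /\
     unit_tri Hm tr x (y * z) =
       unit_tri Hm tr (unit_tri Hm tr x y) z - unit_tri Hm tr x (unit_tri Hm tr y z).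

Variable Phi : U -> A.
Hypothesis HPhi : alg_morph Phi.
Hypothesis HPhii : forall x, Phi (i x) = unit_incl Hm (phi x).

Lemma PhiL : linear_map Phi. Proof. by case: HPhi. Qed.
Lemma Phi1 : Phi 1 = 1. Proof. by case: HPhi. Qed.
Lemma PhiM u v : Phi (u * v) = Phi u * Phi v. Proof. by case: HPhi. Qed.

Lemma Phi_eps u : (Phi u).1 = env_eps E u.
Proof.
have Hz : lie_morph br (fun _ : L => 0 : K^o).
  split; first by move=> a x y; rewrite scaler0 addr0.
  by move=> x y; rewrite mulr0 subrr.
have [F [_ _ Hu]] := env_univ E Hz.
have H1 : alg_morph (fun u => (Phi u).1 : K^o).
  case: HPhi => HL H1 HM; split.
  - by move=> a x y; rewrite HL.
  - by rewrite H1.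
  - move=> x y; rewrite HM /=. done.
rewrite (Hu _ H1) ?(Hu _ (env_eps_morph E)) // => x.
- exact: env_eps_i.
- by rewrite HPhii.
Qed.

Local Notation S0 := (fun w : unitization Hm => exists v, w = unit_incl Hm (phi v)).

Lemma Phi_W u : gen_subalg S0 (Phi u).
Proof.
elim: (all_gen (E:=E) u) => {u} [w [x ->]| |u v _ IHu _ IHv|a u _ IHu|u v _ IHu _ IHv].
- by rewrite HPhii; apply: gen_in; exists x.
- by rewrite Phi1; apply: gen_one.
- by rewrite (lD PhiL); apply: gen_add.
- by rewrite (lZ PhiL); apply: gen_scale.
- by rewrite PhiM; apply: gen_mul.
Qed.

Lemma starL f : linear_map (star f). Proof. exact: bil_l (env_star_bilin E) f. Qed.
Lemma starR g : linear_map (star^~ g). Proof. exact: bil_r (env_star_bilin E) g. Qed.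

Lemma triL x : linear_map (tri x). Proof. exact: bil_l tri_bil x. Qed.
Lemma triR z : linear_map (tri^~ z). Proof. exact: bil_r tri_bil z. Qed.

Lemma starDl u v w : star (u + v) w = star u w + star v w.
Proof. exact: (bDl (env_star_bilin E) u v w). Qed.
Lemma starZl a u w : star (a *: u) w = a *: star u w.
Proof. exact: (bZl (env_star_bilin E) a u w). Qed.
Lemma starDr u v w : star w (u + v) = star w u + star w v.
Proof. exact: (bDr (env_star_bilin E) u v w). Qed.
Lemma starZr a u w : star w (a *: u) = a *: star w u.
Proof. exact: (bZr (env_star_bilin E) a u w). Qed.
Lemma triDl (u v w : A) : tri (u + v) w = tri u w + tri v w.
Proof. exact: (bDl tri_bil u v w). Qed.
Lemma triZl a (u w : A) : tri (a *: u) w = a *: tri u w.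
Proof. exact: (bZl tri_bil a u w). Qed.
Lemma tri1 x : tri x 1 = x.
Proof. by case: x => a v; rewrite /unit_tri A_oneE /= mulr1 scale1r (b0r Htr) addr0. Qed.

Lemma base y f : Phi (star f (i y)) = tri (Phi f) (Phi (i y)).
Proof.
elim: (all_gen (E:=E) f) => {f} [w [x ->]| |u v _ IHu _ IHv|a u _ IHu|u v _ IHu _ IHv].
- rewrite env_star_ext !HPhii Hphi_st /unit_tri /unit_incl /=.
  by rewrite mulr0 scale0r add0r.
- rewrite env_star_1l env_eps_i scale0r (l0 PhiL) Phi1 HPhii /unit_tri /unit_incl A_oneE /=.
  by rewrite mulr0 scaler0 add0r (b0l Htr).
- by rewrite starDl !(lD PhiL) IHu IHv triDl.
- by rewrite starZl !(lZ PhiL) IHu triZl.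
- rewrite env_star_mull (env_D_i y (bil_mul (starL u) (starL v))) !env_star_1r.
  rewrite (lD PhiL) !PhiM IHu IHv.
  have [H _] := Hcond (Phi_W u) (Phi_W v) (ex_intro _ y (HPhii y)).
  by rewrite H.
Qed.

Inductive Rn : nat -> U -> Prop :=
| R1 n : Rn n 1
| Rmul n u y : Rn n u -> Rn n.+1 (u * i y)
| Radd n u v : Rn n u -> Rn n v -> Rn n (u + v)
| Rsc n a u : Rn n u -> Rn n (a *: u)
| Rlift n u : Rn n u -> Rn n.+1 u.

Lemma Rn_le n u k : Rn n u -> Rn (n + k) u.
Proof. move=> H; elim: k => [|k IH]; first by rewrite addn0. by rewrite addnS; apply: Rlift. Qed.

Lemma Rn_mul a b u v : Rn a u -> Rn b v -> Rn (a + b) (u * v).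
Proof.
move=> Hu Hv; elim: Hv => {b v} [b|b v y _ IH|b v w _ IHv _ IHw|b c v _ IH|b v _ IH].
- by rewrite mulr1; apply: Rn_le.
- by rewrite addnS mulrA; apply: Rmul.
- by rewrite mulrDr; apply: Radd.
- by rewrite -scalerAr; apply: Rsc.
- by rewrite addnS; apply: Rlift.
Qed.

Lemma Rn_ex u : exists n, Rn n u.
Proof.
elim: (all_gen (E:=E) u) => {u} [w [x ->]| |u v _ [a IHu] _ [b IHv]|c u _ [a IHu]|u v _ [a IHu] _ [b IHv]].
- by exists 1%N; rewrite -[i x]mul1r; apply: Rmul; apply: R1.
- by exists 0%N; apply: R1.
- exists (a + b)%N; apply: Radd; first exact: Rn_le.
  by rewrite addnC; apply: Rn_le.
- by exists a; apply: Rsc.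
- by exists (a + b)%N; apply: Rn_mul.
Qed.

Lemma star_iy n g y : Rn n g -> Rn n (star g (i y)).
Proof.
elim => {n g} [n|n u x Hu IH|n u v _ IHu _ IHv|n a u _ IH|n u _ IH].
- by rewrite env_star_1l env_eps_i; apply: Rsc; apply: R1.
- rewrite env_star_mull (env_D_i y (bil_mul (starL u) (starL (i x)))) !env_star_1r env_star_ext.
  by apply: Radd; apply: Rmul.
- by rewrite starDl; apply: Radd.
- by rewrite starZl; apply: Rsc.
- exact: Rlift.
Qed.

Lemma triDr (u v w : A) : tri w (u + v) = tri w u + tri w v.
Proof. exact: (bDr tri_bil u v w). Qed.
Lemma triZr a (u w : A) : tri w (a *: u) = a *: tri w u.
Proof. exact: (bZr tri_bil a u w). Qed.

Lemma main_aux n : forall k g, Rn k g -> (k <= n)%N ->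
  forall f, Phi (star f g) = tri (Phi f) (Phi g).
Proof.
elim: n => [|n IHn] k g; elim => {k g} [k|k u y Hu _|k u v _ IHu _ IHv|k a u _ IHu|k u _ IHu] Hk f //.
- by rewrite env_star_1r Phi1 tri1.
- by rewrite starDr !(lD PhiL) IHu // IHv // triDr.
- by rewrite starZr !(lZ PhiL) IHu // triZr.
- by rewrite env_star_1r Phi1 tri1.
- have Hk' : (k <= n)%N by [].
  have Qu := IHn k u Hu Hk'.
  have Qu' := IHn k _ (star_iy y Hu) Hk'.
  rewrite env_star_mulr (lB PhiL) base Qu Qu' base PhiM.
  have [_ H] := Hcond (Phi_W f) (Phi_W u) (ex_intro _ y (HPhii y)).
  by rewrite H.
- by rewrite starDr !(lD PhiL) IHu // IHv // triDr.
- by rewrite starZr !(lZ PhiL) IHu // triZr.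
- by apply: IHu; apply: ltnW.
Qed.

Lemma I1 f g : Phi (star f g) = tri (Phi f) (Phi g).
Proof. have [n Hn] := Rn_ex g; exact: main_aux Hn (leqnn n) f. Qed.

Lemma final_ids f g h :
  [/\ Phi (env_star E f g) = unit_tri Hm tr (Phi f) (Phi g),
      unit_tri Hm tr (Phi f * Phi g) (Phi h) =
        sweedler (env_D E)
          (fun a b => unit_tri Hm tr (Phi f) (Phi a) * unit_tri Hm tr (Phi g) (Phi b)) h
    & unit_tri Hm tr (unit_tri Hm tr (Phi f) (Phi g)) (Phi h) =
        unit_tri Hm tr (Phi f)
          (sweedler (env_D E) (fun a b => unit_tri Hm tr (Phi g) (Phi a) * Phi b) h)].
Proof.
split; first exact: I1.
- rewrite -PhiM -I1 env_star_mull /sweedler (lsum PhiL).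
  by apply: eq_bigr => p _; rewrite PhiM !I1.
- rewrite -!I1 env_star_assoc I1 /sweedler (lsum PhiL).
  congr (tri _ _); apply: eq_bigr => p _; by rewrite PhiM I1.
Qed.
End Main.

Theorem theorem3p6 (K : fieldType) (L : lmodType K) (br st : L -> L -> L)
  (Hpl : right_postLie br st) (E : enveloping br st)
  (V : lmodType K) (m : V -> V -> V) (Hm : nonunital_assoc m)
  (tr : V -> V -> V) (Htr : bilinear_op tr)
  (phi : L -> V) (Hphi : linear_map phi)
  (Hphi_br : forall x y, phi (br x y) = m (phi x) (phi y) - m (phi y) (phi x))
  (Hphi_st : forall x y, phi (st x y) = tr (phi x) (phi y))
  (Hcond : forall x y z : unitization Hm,
     gen_subalg (fun w : unitization Hm => exists v, w = unit_incl Hm (phi v)) x ->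
     gen_subalg (fun w : unitization Hm => exists v, w = unit_incl Hm (phi v)) y ->
     (exists v, z = unit_incl Hm (phi v)) ->
     unit_tri Hm tr (x * y) z = unit_tri Hm tr x z * y + x * unit_tri Hm tr y z /\
     unit_tri Hm tr x (y * z) =
       unit_tri Hm tr (unit_tri Hm tr x y) z - unit_tri Hm tr x (unit_tri Hm tr y z)) :
  exists Phi : env_U E -> unitization Hm,
    [/\ alg_morph Phi,
        (forall x, Phi (env_i E x) = unit_incl Hm (phi x)),
        (forall Psi : env_U E -> unitization Hm, alg_morph Psi ->
           (forall x, Psi (env_i E x) = unit_incl Hm (phi x)) -> forall u, Psi u = Phi u) &
        (forall f g h : env_U E,
          [/\ Phi (env_star E f g) = unit_tri Hm tr (Phi f) (Phi g),
              unit_tri Hm tr (Phi f * Phi g) (Phi h) =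
                sweedler (env_D E)
                  (fun a b => unit_tri Hm tr (Phi f) (Phi a) * unit_tri Hm tr (Phi g) (Phi b)) h
            & unit_tri Hm tr (unit_tri Hm tr (Phi f) (Phi g)) (Phi h) =
                unit_tri Hm tr (Phi f)
                  (sweedler (env_D E) (fun a b => unit_tri Hm tr (Phi g) (Phi a) * Phi b) h)])].
Proof.
have [Phi [HPhi HPhii Huniq]] := env_univ E (incl_lie Hm Hphi Hphi_br).
exists Phi; split => // f g h.
exact: (final_ids (E:=E) Htr Hphi_st Hcond HPhi HPhii).
Qed.
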